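(* There are absolute constants $c>0$ and $c'>0$ such that for every integer $n\ge 3$ and every real $\epsilon$ with $\frac1n \le \epsilon \le \frac{1}{\log_2 n}$, there exists an $\epsilon$-distance-uniform graph on $n$ vertices whose critical distance $d$ satisfies \[ d \ge c'\, 2^{c\,\frac{\log n}{\log \epsilon^{-1}}}. \] (In the paper's notation: $d = 2^{\Omega\left(\frac{\log n}{\log \epsilon^{-1}}\right)}$.)
   Context: For a parameter $\epsilon>0$, an $n$-vertex graph $G$ is called $\epsilon$-distance-uniform if there is a value $d$, called the critical distance, such that for every vertex $v$, all but at most $\epsilon n$ of the other vertices are at graph distance exactly $d$ from $v$. The ratio $\frac{\log n}{\log \epsilon^{-1}}$ does not depend on the base of the logarithm. *)

(* Defs.v *)
From mathcomp Require Import all_boot.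
From Stdlib Require Import Reals.

Set Implicit Arguments.
Unset Strict Implicit.
Unset Printing Implicit Defensive.

Definition simple_graph (n : nat) (e : rel 'I_n) : Prop :=
  symmetric e /\ irreflexive e.

Definition dist_is (n : nat) (e : rel 'I_n) (x y : 'I_n) (d : nat) : Prop :=
  (exists p : seq 'I_n, [/\ path e x p, last x p = y & size p = d]) /\
  (forall p : seq 'I_n, path e x p -> last x p = y -> (d <= size p)%N).

Definition critical_distance (n : nat) (e : rel 'I_n) (eps : R) (d : nat) : Prop :=
  forall v : 'I_n, exists S : {set 'I_n},
    (INR #|S| <= eps * INR n)%R /\
    (forall w : 'I_n, w != v -> w \notin S -> dist_is e v w d).

Definition distance_uniform (n : nat) (e : rel 'I_n) (eps : R) : Prop :=
  exists d : nat, critical_distance e eps d.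

(* Main.v *)
Require Import Defs.
From mathcomp Require Import all_boot zify.

Set Implicit Arguments.
Unset Strict Implicit.
Unset Printing Implicit Defensive.



Definition dg (m t x : nat) : nat := (x %/ m ^ t) %% m.

Definition sedgeP (k : nat) (g h : nat -> nat) : Prop :=
  exists l, [/\ l < k, g l <> h l, (forall t, l < t -> t < k -> g t = h t) &
     (forall t, t < l -> g t = h l /\ h t = g l)].

Definition sedgeB (k : nat) (g h : nat -> nat) : bool :=
  [exists l : 'I_k, (g l != h l) &&
     [forall t : 'I_k, (l < t) ==> (g t == h t)] &&
     [forall t : 'I_k, (t < l) ==> (g t == h l) && (h t == g l)]].

Lemma sedgeBP k g h : reflect (sedgeP k g h) (sedgeB k g h).
Proof.
apply: (iffP existsP).
- case=> l /andP[/andP[Hne /forallP Hup] /forallP Hlo].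
  exists l; split => //.
  + exact/eqP.
  + move=> t lt tk. by have /implyP /(_ lt) /eqP := Hup (Ordinal tk).
  + move=> t tl. have tk : t < k by apply: ltn_trans tl (ltn_ord l).
    by have /implyP /(_ tl) /andP [/eqP -> /eqP ->] := Hlo (Ordinal tk).
- case=> l [lk Hne Hup Hlo]. exists (Ordinal lk).
  apply/andP; split; [apply/andP; split|].
  + by apply/eqP.
  + apply/forallP => t; apply/implyP => lt; apply/eqP; exact: Hup.
  + apply/forallP => t; apply/implyP => tl; have [H1 H2] := Hlo _ tl.
    by rewrite H1 H2 !eqxx.
Qed.

Lemma sedgeP_sym k g h : sedgeP k g h -> sedgeP k h g.
Proof.
case=> l [lk ne up lo]; exists l; split => //.
- by move=> E; apply: ne.
- by move=> t lt tk; rewrite up.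
- by move=> t tl; have [-> ->] := lo t tl.
Qed.

Lemma sedgeB_sym k g h : sedgeB k g h = sedgeB k h g.
Proof. by apply/sedgeBP/sedgeBP => /sedgeP_sym. Qed.

Lemma sedgeB_irr k g : sedgeB k g g = false.
Proof. by apply/sedgeBP; case=> l [_ ? _ _]. Qed.

Lemma sedgeP_ext k g h g' h' : (forall t, t < k -> g t = g' t) ->
  (forall t, t < k -> h t = h' t) -> sedgeP k g h -> sedgeP k g' h'.
Proof.
move=> Eg Eh [l [lk ne up lo]]; exists l; split => //.
- by rewrite -Eg // -Eh.
- by move=> t lt tk; rewrite -Eg // -Eh // up.
- move=> t tl; have tk : t < k by apply: ltn_trans tl lk.
  by rewrite -!Eg // -!Eh //; apply: lo.
Qed.

Lemma sedgeB_ext k g h g' h' : (forall t, t < k -> g t = g' t) ->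
  (forall t, t < k -> h t = h' t) -> sedgeB k g h = sedgeB k g' h'.
Proof.
move=> Eg Eh; apply/sedgeBP/sedgeBP; apply: sedgeP_ext => // t tk.
- by rewrite Eg.
- by rewrite Eh.
Qed.

Fixpoint pot (l w : nat) (g : nat -> nat) : nat :=
  if l is l'.+1 then pot l' w g + (g l' != w) * 2 ^ l' else 0.

Lemma pot_ext l w g h : (forall t, t < l -> g t = h t) -> pot l w g = pot l w h.
Proof.
elim: l => //= l IH H; rewrite IH ?H // => t tl; apply: H; lia.
Qed.

Lemma pot_const l w g c : (forall t, t < l -> g t = c) ->
  pot l w g + (c != w) = (c != w) * 2 ^ l.
Proof.
elim: l => [|l IH] H /=; first by rewrite expn0 muln1 add0n.
have := IH (fun t tl => H t (ltn_trans tl (ltnSn l))).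
rewrite H // expnS; case: (c != w) => /=; lia.
Qed.

Lemma pot_zero l w g : (forall t, t < l -> g t = w) -> pot l w g = 0.
Proof. by move=> H; have := pot_const w H; rewrite eqxx /= addn0. Qed.

Lemma pot_lt l w g : pot l w g < 2 ^ l.
Proof.
elim: l => [|l IH] /=; first by rewrite expn0.
rewrite expnS; case: (g l != w) => /=; lia.
Qed.

Lemma pot_ne l w g : (forall t, t < l -> g t <> w) -> pot l w g = 2 ^ l - 1.
Proof.
elim: l => [|l IH] H /=; first by rewrite expn0.
rewrite IH; last by move=> t tl; apply: H; lia.
have -> : (g l != w) = true by apply/eqP; apply: H.
have := expn_gt0 2 l; rewrite expnS /=; lia.
Qed.

Lemma pot_sum l w g h : (forall t, t < l -> g t <> h t) ->
  2 ^ l - 1 <= pot l w g + pot l w h.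
Proof.
elim: l => [|l IH] H /=; first by rewrite expn0.
have := IH (fun t tl => H t (ltn_trans tl (ltnSn l))).
have := H l (ltnSn l). have := expn_gt0 2 l. rewrite expnS.
case: eqP => Eg; case: eqP => Eh /=; lia.
Qed.

Lemma pot_edge k w g h l : l < k -> g l <> h l ->
  (forall t, l < t -> t < k -> g t = h t) ->
  (forall t, t < l -> g t = h l /\ h t = g l) ->
  forall L, l < L -> L <= k -> pot L w g + (h l != w) = pot L w h + (g l != w).
Proof.
move=> lk ne up lo; elim=> // L IH lL Lk /=.
case: (ltnP l L) => lL'.
- rewrite up //. have := IH lL' (ltnW Lk). lia.
- have El : L = l by lia.
  subst L.
  have P1 := pot_const w (fun t tl => proj1 (lo t tl)).
  have P2 := pot_const w (fun t tl => proj2 (lo t tl)).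
  move: P1 P2; case: (g l != w); case: (h l != w) => /=; lia.
Qed.

Lemma pot_lip k w g h : sedgeP k g h -> pot k w g <= (pot k w h).+1.
Proof.
case=> l [lk ne up lo].
have := pot_edge w lk ne up lo lk (leqnn k).
case: (g l != w); case: (h l != w) => /=; lia.
Qed.


Definition sedgeS (k : nat) : rel (seq nat) := fun s s' => sedgeB k (nth 0 s) (nth 0 s').

Lemma path_pot k w x p : path (sedgeS k) x p ->
  pot k w (nth 0 x) <= pot k w (nth 0 (last x p)) + size p /\
  pot k w (nth 0 (last x p)) <= pot k w (nth 0 x) + size p.
Proof.
elim: p x => [|z p IH] x /=; first by rewrite addn0.
move=> /andP [/sedgeBP Hxz /IH [H1 H2]].
have A := pot_lip w Hxz. have B := pot_lip w (sedgeP_sym Hxz). lia.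
Qed.

Lemma first_exit (T : Type) (P : pred T) x p :
  P x -> ~~ P (last x p) -> exists p1 B p2, [/\ p = p1 ++ B :: p2, P (last x p1) & ~~ P B].
Proof.
elim: p x => [|z p IH] x Px /=; first by rewrite Px.
case Pz: (P z) => H.
- have [p1 [B [p2 [E H1 H2]]]] := IH z Pz H. exists (z :: p1), B, p2. by rewrite E.
- exists [::], z, p. by rewrite Pz.
Qed.

Lemma edge_top K g h : sedgeP K.+1 g h -> g K <> h K ->
  forall t, t < K -> g t = h K /\ h t = g K.
Proof.
case=> l [lk ne up lo] gh t tK.
have El : l = K.
  case: (ltngtP l K) => // lK; last by lia.
  by have := up K lK (ltnSn K).
by subst l; apply: lo.
Qed.

Lemma lower K (x y : seq nat) (p : seq (seq nat)) :
  nth 0 x K <> nth 0 y K ->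
  (forall t, t < K -> [/\ nth 0 x t <> nth 0 y K, nth 0 y t <> nth 0 x K
                        & nth 0 x t <> nth 0 y t]) ->
  path (sedgeS K.+1) x p -> last x p = y -> uniq (x :: p) ->
  all (fun s => size s == K.+1) (x :: p) ->
  2 ^ K.+1 - 1 <= size p.
Proof.
move=> ab good Hp Hl Hu Hs.
have e2 : 0 < 2 ^ K by rewrite expn_gt0.
have nP : ~~ (nth 0 (last x p) K == nth 0 x K).
  by rewrite Hl; apply/eqP => E; apply: ab.
have [p1 [B1 [p2 [Ep PA1 PB1]]]] :=
  first_exit (P := fun s => nth 0 s K == nth 0 x K) (x := x) (p := p) (eqxx _) nP.
move: PA1 PB1 => /= /eqP PA1 /eqP PB1.
set A1 := last x p1 in PA1.
move: Hp; rewrite Ep cat_path /= => /andP [Hp1 /andP [/sedgeBP HA1B1 Hp2]].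
have ne1 : nth 0 A1 K <> nth 0 B1 K by rewrite PA1 => E; apply: PB1; rewrite E.
have HE1 := edge_top HA1B1 ne1.
have Hsz : size p = size p1 + (size p2).+1 by rewrite Ep size_cat.
have Hl2 : last B1 p2 = y by rewrite -Hl Ep last_cat.
set a := nth 0 x K in PA1 PB1 HE1 ab good.
set b := nth 0 y K in ab good.
set v := nth 0 B1 K in PB1 HE1.
have [P1 _] := path_pot v Hp1.
move: P1; rewrite /= -/A1 PA1 (pot_zero (w := v) (g := nth 0 A1)); last first.
  by move=> t tK; have [H1 H2] := HE1 t tK.
have -> : (a != v) = true by apply/eqP => E; apply: PB1.
rewrite add0n => P1.
have P1' : pot K v (nth 0 x) <= size p1 by lia.
clear P1.
case: (eqVneq v b) => [Evb|Nvb].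
-
  have [_ P2] := path_pot a Hp2.
  move: P2; rewrite Hl2 /= -/b -/v Evb (pot_zero (w := a) (g := nth 0 B1)); last first.
    by move=> t tK; have [H1 H2] := HE1 t tK; rewrite H2 -/A1 PA1.
  rewrite (pot_ne (w := a) (g := nth 0 y)); last first.
    by move=> t tK; have [H1 H2 H3] := good t tK.
  have -> : (b != a) = true by apply/eqP => E; apply: ab.
  move=> P2.
  have P3 : pot K b (nth 0 x) = 2 ^ K - 1.
    by apply: pot_ne => t tK; have [H1 H2 H3] := good t tK.
  rewrite Evb P3 in P1'.
  move: P2 => /= P2.
  rewrite size_cat /= expnS. lia.
-
  have nP2 : ~~ (nth 0 (last B1 p2) K == v).
    by rewrite Hl2; apply/eqP => E; move/eqP: Nvb; apply; rewrite -E.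
  have [q1 [B2 [q2 [Eq PA2 PB2]]]] :=
    first_exit (P := fun s => nth 0 s K == v) (x := B1) (p := p2) (eqxx _) nP2.
  move: PA2 PB2 => /= /eqP PA2 /eqP PB2.
  set A2 := last B1 q1 in PA2.
  move: Hp2; rewrite Eq cat_path /= => /andP [Hq1 /andP [/sedgeBP HA2B2 Hq2]].
  have ne2 : nth 0 A2 K <> nth 0 B2 K by rewrite PA2 => E; apply: PB2; rewrite E.
  have HE2 := edge_top HA2B2 ne2.
  have Hl3 : last B2 q2 = y by rewrite -Hl2 Eq last_cat.
  have Hsz2 : size p2 = size q1 + (size q2).+1 by rewrite Eq size_cat.
  set w := nth 0 B2 K in PB2 HE2.
  have Nwa : w <> a.
    move=> Ewa.
    have sA1 : size A1 = K.+1.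
      apply/eqP; apply: (allP Hs). by rewrite /A1 Ep -cat_cons mem_cat mem_last.
    have sB2 : size B2 = K.+1.
      apply/eqP; apply: (allP Hs). rewrite Ep Eq. by rewrite !(mem_cat, inE, eqxx, orbT).
    have EB : B2 = A1.
      apply: (@eq_from_nth _ 0); first by rewrite sA1 sB2.
      move=> i; rewrite sB2 ltnS leq_eqVlt => /orP [/eqP ->|iK].
      + by rewrite -/w Ewa PA1.
      + by case: (HE2 i iK) => _ ->; case: (HE1 i iK) => ->.
    move: Hu; rewrite Ep Eq -cat_cons cat_uniq => /and3P [_ /hasP H _].
    apply: H; exists B2; first by rewrite !(mem_cat, inE, eqxx, orbT).
    by rewrite EB /A1 mem_last.
  have [Q1 _] := path_pot w Hq1.
  move: Q1; rewrite /= -/A2 PA2 -/v (pot_zero (w := w) (g := nth 0 A2)); last first.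
    by move=> t tK; have [H1 H2] := HE2 t tK.
  rewrite (pot_ne (w := w) (g := nth 0 B1)); last first.
    by move=> t tK; have [_ H2] := HE1 t tK; rewrite H2 -/A1 PA1 => E; apply: Nwa; rewrite -E.
  have -> : (v != w) = true by apply/eqP => E; apply: PB2.
  rewrite add0n => Q1.
  case: (eqVneq w b) => [Ewb|Nwb].
  + have [_ Q2] := path_pot v Hq2.
    move: Q2; rewrite Hl3 /= -/b -/w Ewb (pot_zero (w := v) (g := nth 0 B2)); last first.
      by move=> t tK; have [H1 H2] := HE2 t tK; rewrite H2 -/A2 PA2.
    have -> : (b != v) = true by apply/eqP => E; move/eqP: Nvb; apply; rewrite E.
    rewrite add0n => Q2.
    have S := pot_sum (l := K) v (g := nth 0 x) (h := nth 0 y)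
                (fun t tK => let: And3 _ _ z := good t tK in z).
    move: Q1 Q2 => /= Q1 Q2.
    rewrite !size_cat /= ?size_cat /= expnS. lia.
  + have [Q2 _] := path_pot b Hq2.
    move: Q2; rewrite Hl3 /= -/b -/w (pot_ne (w := b) (g := nth 0 B2)); last first.
      by move=> t tK; have [_ H2] := HE2 t tK; rewrite H2 -/A2 PA2; apply/eqP.
    have -> : (w != b) = true by apply/eqP => E; move/eqP: Nwb; apply.
    have -> : (b != b) = false by rewrite eqxx.
    have := pot_lt K b (nth 0 y).
    move=> Lt Q2.
    move: Q1 Q2 => /= Q1 Q2.
    rewrite !size_cat /= ?size_cat /= expnS. lia.
Qed.


Definition dgf (m : nat) (i : nat) : nat -> nat := fun t => dg m t i.
Definition eS (m k n : nat) : rel 'I_n := fun i j => sedgeB k (dgf m i) (dgf m j).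
Arguments eS : clear implicits.
Definition psi (m k : nat) (i : nat) : seq nat := mkseq (dgf m i) k.

Lemma nth_psi m k i t : t < k -> nth 0 (psi m k i) t = dg m t i.
Proof. by move=> tk; rewrite /psi nth_mkseq. Qed.

Lemma path_psi m k n (i : 'I_n) p : path (eS m k n) i p ->
  path (sedgeS k) (psi m k i) (map (fun j : 'I_n => psi m k j) p).
Proof.
elim: p i => //= j p IH i /andP [Hij Hp]; rewrite IH // andbT.
rewrite /sedgeS (sedgeB_ext (g' := dgf m i) (h' := dgf m j)) //.
- by move=> t tk; rewrite nth_psi.
- by move=> t tk; rewrite nth_psi.
Qed.

Lemma G_lower m K n (i j : 'I_n) p :
  dg m K i <> dg m K j ->
  (forall t, t < K -> [/\ dg m t i <> dg m K j, dg m t j <> dg m K i & dg m t i <> dg m t j]) ->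
  path (eS m K.+1 n) i p -> last i p = j -> 2 ^ K.+1 - 1 <= size p.
Proof.
move=> ab good Hp Hl.
set q := map (fun j : 'I_n => psi m K.+1 j) p.
have Hq : path (sedgeS K.+1) (psi m K.+1 i) q by apply: path_psi.
have [p' [Hp' Hu Hsub Hl']] : exists p', [/\ path (sedgeS K.+1) (psi m K.+1 i) p',
   uniq (psi m K.+1 i :: p'), {subset p' <= q} & last (psi m K.+1 i) p' = last (psi m K.+1 i) q].
  by case: (shortenP Hq) => p' Hp' Hu Hsub; exists p'.
have Hsz : size p' <= size p.
  rewrite -(size_map (fun j : 'I_n => psi m K.+1 j)).
  apply: uniq_leq_size => //; by case/andP: Hu.
apply: leq_trans Hsz.
have Hlq : last (psi m K.+1 i) q = psi m K.+1 j by have := last_map (fun j : 'I_n => psi m K.+1 j) p i; rewrite /= -/q => ->; rewrite Hl.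
apply: (@lower K (psi m K.+1 i) (psi m K.+1 j) p') => //.
- by rewrite !nth_psi.
- move=> t tK; rewrite !nth_psi //; try lia. have [H1 H2 H3] := good t tK; by split.
- by rewrite Hl' Hlq.
- rewrite /= size_map size_iota eqxx /=; apply/allP => s /Hsub /mapP [z _ ->].
  by rewrite /psi size_mkseq.
Qed.


Definition setlow (l w : nat) (g : nat -> nat) : nat -> nat :=
  fun t => if t < l then w else g t.
Definition flip (l w : nat) (g : nat -> nat) : nat -> nat :=
  fun t => if t < l then g l else if t == l then w else g t.

Fixpoint walk (l w : nat) (g : nat -> nat) : seq (nat -> nat) :=
  if l is l'.+1 then
    (if g l' == w then walk l' w g
     else walk l' w g ++ flip l' w g :: walk l' w (flip l' w g))
  else [::].

Lemma walk_last l w g t : last g (walk l w g) t = setlow l w g t.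
Proof.
elim: l g t => [|l IH] g t /=; first by rewrite /setlow.
case: eqP => H.
- rewrite IH /setlow.
  case: (ltnP t l) => t1; case: (ltnP t l.+1) => t2 //; try lia.
  have E : t = l by lia.
  by rewrite E H.
- rewrite last_cat /= IH /setlow /flip.
  case: (ltnP t l) => t1; case: (ltnP t l.+1) => t2 //; try lia.
  + have E : t = l by lia.
    by rewrite E eqxx.
  + have E : (t == l) = false by apply/eqP; lia.
    by rewrite E.
Qed.

Lemma walk_size l w g : size (walk l w g) = pot l w g.
Proof.
elim: l g => //= l IH g. case: eqP => H.
- by rewrite IH /= mul0n addn0.
- rewrite size_cat /= !IH (@pot_ne l w (flip l w g)); last first.
    by move=> t tl; rewrite /flip tl.
  have := expn_gt0 2 l; rewrite /=; lia.
Qed.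

Lemma walk_path k l w g : l <= k -> path (sedgeB k) g (walk l w g).
Proof.
elim: l g => //= l IH g lk. case: eqP => H.
- apply: IH; lia.
- rewrite cat_path IH /=; last by lia.
  rewrite IH ?andbT; last by lia.
  rewrite (sedgeB_ext (g' := setlow l w g) (h' := flip l w g)) //; last first.
    by move=> t _; rewrite walk_last.
  apply/sedgeBP; exists l; split => //.
  + by rewrite /setlow /flip ltnn eqxx.
  + move=> t lt tk; rewrite /setlow /flip.
    have -> : (t < l) = false by apply/negbTE; rewrite -leqNgt; lia.
    by have -> : (t == l) = false by apply/eqP; lia.
  + by move=> t tl; rewrite /setlow /flip tl ltnn eqxx.
Qed.

Definition validf (m k : nat) (h : nat -> nat) : bool := [forall t : 'I_k, h t < m].

Lemma validfP m k h : reflect (forall t, t < k -> h t < m) (validf m k h).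
Proof.
apply: (iffP forallP) => H t.
- by move=> tk; apply: (H (Ordinal tk)).
- by apply: H.
Qed.

Lemma walk_valid m k l w g : l <= k -> validf m k g -> w < m -> all (validf m k) (walk l w g).
Proof.
elim: l g => //= l IH g lk Hg Hw. case: eqP => _; first by apply: IH => //; lia.
have Vf : validf m k (flip l w g).
  apply/validfP => t tk; rewrite /flip.
  move/validfP: Hg => Hg.
  case: (t < l); first by apply: Hg; lia.
  by case: (t == l); [|apply: Hg].
rewrite all_cat /= Vf IH //; last by lia.
by rewrite IH //; lia.
Qed.

Fixpoint enc (m l : nat) (h : nat -> nat) : nat :=
  if l is l'.+1 then h 0 + m * enc m l' (fun t => h t.+1) else 0.

Lemma enc_lt m l h : 0 < m -> (forall t, t < l -> h t < m) -> enc m l h < m ^ l.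
Proof.
elim: l h => [|l IH] h m0 H /=; first by rewrite expn0.
have := IH (fun t => h t.+1) m0 (fun t tl => H t.+1 tl).
have := H 0 (ltn0Sn l). rewrite expnS. nia.
Qed.

Lemma dg_enc m l h : 0 < m -> (forall t, t < l -> h t < m) ->
  forall t, t < l -> dg m t (enc m l h) = h t.
Proof.
elim: l h => [|l IH] h m0 H t tl; first by rewrite ltn0 in tl.
have h0 : h 0 < m by apply: H.
rewrite /=.
case: t tl => [|t] tl.
- by rewrite /dg expn0 divn1 addnC mulnC modnMDl modn_small.
- rewrite /dg expnS divnMA addnC mulnC divnMDl // (divn_small h0) addn0.
  have := IH (fun t => h t.+1) m0 (fun u ul => H u.+1 ul) t tl.
  by rewrite /dg => ->.
Qed.

Definition liftv (m k n : nat) (j : 'I_n) (h : nat -> nat) : 'I_n :=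
  if [forall t : 'I_k, h t == dg m t j] then j else insubd j (enc m k h).

Lemma dg_lift m k n (j : 'I_n) h : 0 < m -> m ^ k <= n -> validf m k h ->
  forall t, t < k -> dg m t (liftv m k j h) = h t.
Proof.
move=> m0 Mn /validfP V t tk; rewrite /liftv; case: ifP => [/forallP H | _].
- by have /eqP := H (Ordinal tk).
- rewrite val_insubd (leq_trans (enc_lt m0 V) Mn).
  by apply: dg_enc.
Qed.

Lemma path_lift m k n (i j : 'I_n) g s : 0 < m -> m ^ k <= n ->
  path (sedgeB k) g s -> all (validf m k) s -> (forall t, t < k -> dg m t i = g t) ->
  path (eS m k n) i (map (liftv m k j) s).
Proof.
move=> m0 Mn; elim: s g i => //= h s IH g i /andP [Hgh Hs] /andP [Vh Vs] Hi.
apply/andP; split.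
- rewrite /eS (sedgeB_ext (g' := g) (h' := h)) //.
  by move=> t tk; rewrite /dgf dg_lift.
- apply: IH Hs Vs _ => t tk; exact: dg_lift.
Qed.

Lemma last_rev_belast (T : Type) (y : T) (W : seq T) : last (last y W) (rev (belast y W)) = y.
Proof. case: W => //= z W; by rewrite rev_cons last_rcons. Qed.

Lemma all_belast (T : Type) (P : pred T) x s : all P (x :: s) -> all P (belast x s) && P (last x s).
Proof. by rewrite lastI all_rcons andbC. Qed.

Lemma G_upper m K n (i j : 'I_n) : 0 < m -> m ^ K.+1 <= n ->
  dg m K i <> dg m K j ->
  (forall t, t < K -> dg m t i <> dg m K j /\ dg m t j <> dg m K i) ->
  exists p, [/\ path (eS m K.+1 n) i p, last i p = j & size p = 2 ^ K.+1 - 1].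
Proof.
move=> m0 Mn ab good.
set X := dgf m i. set Y := dgf m j. set a := X K. set b := Y K.
set W1 := walk K b X. set W2 := walk K a Y.
set s := W1 ++ last Y W2 :: rev (belast Y W2).
have VX : validf m K.+1 X by apply/validfP => t _; rewrite /X /dgf /dg ltn_mod.
have VY : validf m K.+1 Y by apply/validfP => t _; rewrite /Y /dgf /dg ltn_mod.
have bm : b < m by rewrite /b /Y /dgf /dg ltn_mod.
have am : a < m by rewrite /a /X /dgf /dg ltn_mod.
have V2 : all (validf m K.+1) (Y :: W2) by rewrite /= VY walk_valid.
have [VB VL] := andP (all_belast V2).
exists (map (liftv m K.+1 j) s); split.
- apply: path_lift => //.
  + rewrite cat_path walk_path //= ; apply/andP; split.
    * rewrite (sedgeB_ext (g' := setlow K b X) (h' := setlow K a Y)); last first.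
        by move=> t _; rewrite walk_last.
        by move=> t _; rewrite walk_last.
      apply/sedgeBP; exists K; split => //.
      -- by rewrite /setlow ltnn.
      -- by move=> t Kt tK; lia.
      -- by move=> t tK; rewrite /setlow tK ltnn.
    * rewrite rev_path (@eq_path _ _ (sedgeB K.+1)); first exact: walk_path.
      by move=> u v; rewrite /= sedgeB_sym.
  + by rewrite all_cat /= walk_valid //= VL all_rev VB.
- rewrite /s map_cat last_cat /= last_map last_rev_belast /liftv.
  by have -> : [forall t : 'I_K.+1, Y t == dg m t j] by apply/forallP => t; rewrite /Y /dgf.
- rewrite size_map size_cat /= size_rev size_belast !walk_size.
  rewrite (@pot_ne K b X); last by move=> t tK; case: (good t tK).
  rewrite (@pot_ne K a Y); last by move=> t tK; case: (good t tK).
  have := expn_gt0 2 K; rewrite expnS /=; lia.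
Qed.


Definition badB (m K : nat) (i j : nat) : bool :=
  [exists t : 'I_K.+1, (dg m t j == dg m t i) || (dg m t j == dg m K i) || (dg m K j == dg m t i)].

Lemma digit_decomp m t x : 0 < m ->
  x = x %/ m ^ t.+1 * m ^ t.+1 + dg m t x * m ^ t + x %% m ^ t.
Proof.
move=> m0.
have E1 := divn_eq x (m ^ t).
have E2 := divn_eq (x %/ m ^ t) m.
rewrite expnSr divnMA /dg.
rewrite {1}E1 {1}E2.
move: (x %/ m ^ t %/ m) (x %/ m ^ t %% m) (x %% m ^ t) => a b c.
by rewrite mulnDl -mulnA (mulnC m).
Qed.

Lemma card_digit m n t c : 0 < m -> m ^ t.+1 <= n ->
  #|[set j : 'I_n | dg m t j == c]| <= 2 * (n %/ m).
Proof.
move=> m0 Mn.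
set Q := n %/ m ^ t.+1.
set N := Q.+1 * m ^ t.
have mt0 : 0 < m ^ t by rewrite expn_gt0 m0.
have mt1 : 0 < m ^ t.+1 by rewrite expn_gt0 m0.
have N0 : 0 < N by rewrite /N muln_gt0 mt0.
pose f := fun j : 'I_n => (inord (j %/ m ^ t.+1 * m ^ t + j %% m ^ t) : 'I_N.-1.+1).
have Hb : forall j : 'I_n, j %/ m ^ t.+1 * m ^ t + j %% m ^ t < N.-1.+1.
  move=> j; rewrite prednK //.
  have : j %/ m ^ t.+1 <= Q by apply: leq_div2r; apply: ltnW.
  have : j %% m ^ t < m ^ t by apply: ltn_pmod.
  rewrite /N. nia.
have Hinj : {in [set j : 'I_n | dg m t j == c] &, injective f}.
  move=> j1 j2; rewrite !inE => /eqP H1 /eqP H2 /(congr1 val).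
  rewrite /f /= !inordK ?Hb // => E.
  have Eq : j1 %/ m ^ t.+1 = j2 %/ m ^ t.+1.
    have := congr1 (fun x => x %/ m ^ t) E.
    by rewrite /= !divnMDl // !(divn_small (ltn_pmod _ mt0)) !addn0.
  have Er : j1 %% m ^ t = j2 %% m ^ t.
    have := congr1 (fun x => x %% m ^ t) E.
    by rewrite /= !modnMDl !modn_mod.
  apply: val_inj => /=.
  by rewrite (digit_decomp t j1 m0) (digit_decomp t j2 m0) Eq Er H1 H2.
have := @leq_card_in _ _ f _ Hinj; rewrite card_ord prednK // => HN.
apply: leq_trans HN _.
have Q1 : 1 <= Q by rewrite /Q leq_divRL // mul1n.
have Q2 : Q * m ^ t <= n %/ m.
  by rewrite leq_divRL // -mulnA -expnSr leq_trunc_div.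
rewrite /N. nia.
Qed.

Lemma card_bigcup_le n K (U : nat -> {set 'I_n}) :
  #|\bigcup_(t < K) U t| <= \sum_(t < K) #|U t|.
Proof.
apply: (big_ind2 (fun (A : {set 'I_n}) (s : nat) => #|A| <= s)).
- by rewrite cards0.
- move=> A1 s1 A2 s2 H1 H2; apply: leq_trans (leq_card_setU A1 A2).1 _.
  exact: leq_add.
- by [].
Qed.

Lemma card_bad m K n (i : 'I_n) : 0 < m -> m ^ K.+1 <= n ->
  #|[set j : 'I_n | badB m K i j]| <= K.+1 * (6 * (n %/ m)).
Proof.
move=> m0 Mn.
pose U := fun t : nat => [set j : 'I_n | dg m t j == dg m t i] :|:
                         [set j : 'I_n | dg m t j == dg m K i] :|:
                         [set j : 'I_n | dg m K j == dg m t i].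
have Hsub : [set j : 'I_n | badB m K i j] \subset \bigcup_(t < K.+1) U t.
  apply/subsetP => j; rewrite inE => /existsP [t H].
  apply/bigcupP; exists t => //.
  by rewrite /U !in_setU !inE.
apply: leq_trans (subset_leq_card Hsub) _.
apply: leq_trans (card_bigcup_le _ _) _.
have HU : forall t, t < K.+1 -> #|U t| <= 6 * (n %/ m).
  move=> t tK.
  have Mt : m ^ t.+1 <= n by apply: leq_trans Mn; rewrite leq_pexp2l.
  have C1 := card_digit (dg m t i) m0 Mt.
  have C2 := card_digit (dg m K i) m0 Mt.
  have C3 := card_digit (dg m t i) m0 Mn.
  rewrite /U.
  apply: leq_trans (leq_card_setU _ _).1 _.
  have := (leq_card_setU [set j : 'I_n | dg m t j == dg m t i] [set j : 'I_n | dg m t j == dg m K i]).1.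
  lia.
have -> : K.+1 * (6 * (n %/ m)) = \sum_(t < K.+1) (6 * (n %/ m)).
  by rewrite sum_nat_const card_ord.
by apply: leq_sum => t _; apply: HU.
Qed.

Lemma S_construction m K n : 1 < m -> m ^ K.+1 <= n ->
  exists e : rel 'I_n, simple_graph e /\ forall v : 'I_n, exists S : {set 'I_n},
    #|S| <= K.+1 * (6 * (n %/ m)) /\
    (forall w, w != v -> w \notin S -> dist_is e v w (2 ^ K.+1 - 1)).
Proof.
move=> m1 Mn; have m0 : 0 < m by lia.
exists (eS m K.+1 n); split.
- split.
  + by move=> i j; rewrite /eS sedgeB_sym.
  + by move=> i; rewrite /eS sedgeB_irr.
- move=> v; exists [set j : 'I_n | badB m K v j]; split; first exact: card_bad.
  move=> w _; rewrite inE => /existsPn Hg.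
  have G : forall t, t < K.+1 -> [/\ dg m t w != dg m t v, dg m t w != dg m K v & dg m K w != dg m t v].
    move=> t tK; have := Hg (Ordinal tK); rewrite /= !negb_or => /andP [/andP [-> ->] ->].
    by [].
  have ab : dg m K v <> dg m K w.
    by have [H _ _] := G K (ltnSn K); move=> E; move/eqP: H; apply; rewrite E.
  split.
  + have Gup : forall t, t < K -> dg m t v <> dg m K w /\ dg m t w <> dg m K v.
      move=> t tK; have [h1 h2 h3] := G t (ltnW tK); split.
      * by move=> E; move/eqP: h3; apply; rewrite E.
      * by move/eqP: h2.
    have [p [H1 H2 H3]] := @G_upper m K n v w m0 Mn ab Gup.
    by exists p.
  + move=> p Hp Hl; apply: (@G_lower m K n v w p ab) => // t tK.
    have [h1 h2 h3] := G t (ltnW tK).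
    split.
    * by move=> E; move/eqP: h3; apply; rewrite E.
    * by move/eqP: h2.
    * by move=> E; move/eqP: h1; apply; rewrite E.
Qed.

Lemma Kn_construction n : exists e : rel 'I_n, simple_graph e /\
  forall v w : 'I_n, w != v -> dist_is e v w 1.
Proof.
exists (fun i j : 'I_n => i != j); split.
- split; [by move=> i j; rewrite eq_sym | by move=> i; rewrite eqxx].
- move=> v w wv; split.
  + exists [:: w]; split => //=; by rewrite eq_sym wv.
  + by case=> [/= _ E|]; [move: wv; rewrite E eqxx|].
Qed.

Unset Implicit Arguments.

From Stdlib Require Import Reals Lra.

Lemma expn_pow a b : expn a b = Nat.pow a b.
Proof. elim: b => // b IH; by rewrite expnS IH. Qed.

Lemma INR_expn a b : INR (expn a b) = (INR a ^ b)%R.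
Proof. by rewrite expn_pow pow_INR. Qed.

Lemma INR_muln a b : INR (muln a b) = (INR a * INR b)%R.
Proof. exact: mult_INR. Qed.

Lemma ln_le' x y : (0 < x)%R -> (x <= y)%R -> (ln x <= ln y)%R.
Proof. move=> x0 [xy|<-]; [left; exact: ln_increasing | right; reflexivity]. Qed.

Lemma INR_le_ssr a b : (a <= b)%N -> (INR a <= INR b)%R.
Proof. by move/leP; apply: le_INR. Qed.

Lemma INR_lt_ssr a b : (a < b)%N -> (INR a < INR b)%R.
Proof. by move/ltP; apply: lt_INR. Qed.

Arguments INR_le_ssr {a b}.
Arguments INR_lt_ssr {a b}.
Arguments ln_le' {x y}.

Theorem theorem2 :
  exists c c' : R, (0 < c)%R /\ (0 < c')%R /\
  forall (n : nat) (eps : R), (3 <= n)%N ->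
    (/ INR n <= eps)%R -> (eps <= / (ln (INR n) / ln 2))%R ->
    exists (e : rel 'I_n) (d : nat),
      simple_graph e /\ critical_distance e eps d /\
      (c' * Rpower 2 (c * (ln (INR n) / ln (/ eps))) <= INR d)%R.
Proof.
exists (/ 7)%R, (/ 4)%R; split; [lra|split; [lra|]].
move=> n eps Hn H1 H2.
have n3 : (3 <= INR n)%R.
  have := INR_le_ssr Hn; rewrite /=; lra.
have ln2 : (0 < ln 2)%R by rewrite -ln_1; apply: ln_increasing; lra.
have lnn3 : (ln 3 <= ln (INR n))%R by apply: ln_le'; lra.
have ln98 : (3 * ln 2 <= 2 * ln 3)%R.
  have e1 := ln_pow 2 ltac:(lra) 3.
  have e2 := ln_pow 3 ltac:(lra) 2.
  have : (ln (2 ^ 3) <= ln (3 ^ 2))%R by apply: ln_le'; simpl; lra.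
  rewrite e1 e2 /=. lra.
set A := (ln (INR n) / ln 2)%R in H2.
have AL : (A * ln 2 = ln (INR n))%R by rewrite /A; field; lra.
have A32 : (3 / 2 <= A)%R by nra.
have eps0 : (0 < eps)%R.
  apply: Rlt_le_trans H1; apply: Rinv_0_lt_compat; lra.
have Aeps : (A <= / eps)%R.
  have := Rinv_le_contravar _ _ eps0 H2; rewrite Rinv_inv; done.
set u := (/ eps)%R in Aeps *.
have ue : (u * eps = 1)%R by rewrite /u; field; lra.
have u32 : (3 / 2 <= u)%R by lra.
pose r := (6 * u * u)%R.
have [Hr1 Hr2] := archimed r.
set z := up r in Hr1 Hr2.
have r0 : (0 < r)%R by rewrite /r; nra.
have z0 : (0 <= z)%Z by apply: Z.lt_le_incl; apply: lt_0_IZR; lra.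
set m := Z.to_nat z.
have Hm : INR m = IZR z by rewrite INR_IZR_INZ Znat.Z2Nat.id.
have m_lo : (6 * u * u < INR m)%R by rewrite Hm; rewrite /r in Hr1; lra.
have m_hi : (INR m <= 6 * u * u + 1)%R by rewrite Hm; rewrite /r in Hr2; lra.
have m1 : (1 < m)%N.
  apply/ltP; apply: INR_lt; rewrite /=; nra.
have n0 : (0 < n)%N by apply: leq_trans Hn.
have Hk1 := trunc_logP m1 n0.
have Hk2 := trunc_log_ltn n m1.
set k := trunc_log m n in Hk1 Hk2.
have mR0 : (0 < INR m)%R by nra.
have Rk2 : (INR n < INR m ^ k.+1)%R by rewrite -INR_expn; apply: INR_lt_ssr.
have lnk : (ln (INR n) < INR k.+1 * ln (INR m))%R.
  rewrite -ln_pow //; apply: ln_increasing => //; lra.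
have u5 : (7 <= u ^ 5)%R.
  have := pow_incr (3/2) u 5 ltac:(lra). simpl. lra.
have m_u7 : (INR m <= u ^ 7)%R.
  have -> : (u ^ 7 = u ^ 5 * (u * u))%R by simpl; ring.
  nra.
have lnm : (ln (INR m) <= INR 7 * ln u)%R.
  rewrite -ln_pow; last lra. apply: ln_le' => //.
have lnu0 : (0 < ln u)%R by rewrite -ln_1; apply: ln_increasing; lra.
have k0 : (0 <= INR k.+1)%R by apply: pos_INR.
have lnk2 : (ln (INR n) < INR k.+1 * (7 * ln u))%R.
  have : (INR k.+1 * ln (INR m) <= INR k.+1 * (INR 7 * ln u))%R.
    by apply: Rmult_le_compat_l.
  have -> : INR 7 = 7%R by simpl; lra.
  lra.
set L := (ln (INR n) / ln u)%R.
have LL : (L * ln u = ln (INR n))%R by rewrite /L; field; lra.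
have Lk : (/ 7 * L < INR k.+1)%R by nra.
have Rp : (Rpower 2 (/ 7 * L) <= 2 ^ k.+1)%R.
  rewrite -Rpower_pow; last lra.
  apply: Rle_Rpower; lra.
have p0 : (0 < 2 ^ k.+1)%R by apply: pow_lt; lra.
case Ek: k => [|K].
-
  have [e [He Hd]] := Kn_construction n.
  exists e, 1%N; split => //; split.
  + move=> v; exists set0; split.
    * rewrite cards0 /=; nra.
    * by move=> w wv _; apply: Hd.
  + rewrite Ek /= in Rp. rewrite /=. lra.
- rewrite Ek in Hk1.
  have [e [He HS]] := S_construction m1 Hk1.
  exists e, (expn 2 K.+1 - 1)%N; split => //; split.
  + move=> v; have [S [HSc HSd]] := HS v; exists S; split => //.
    have C1 := INR_le_ssr HSc.
    rewrite !INR_muln in C1.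
    have Hq : (INR (n %/ m) * INR m <= INR n)%R.
      by rewrite -INR_muln; apply: INR_le_ssr; apply: leq_trunc_div.
    have q0 : (0 <= INR (n %/ m))%R by apply: pos_INR.
    have Hkn : (INR K.+1 <= u)%R.
      have h2 : (2 ^ K.+1 <= INR n)%R.
        apply: Rle_trans (INR_le_ssr Hk1); rewrite INR_expn.
        apply: pow_incr; split; [lra|]. have := INR_le_ssr m1; rewrite /=; lra.
      have := ln_le' (pow_lt 2 K.+1 ltac:(lra)) h2.
      rewrite ln_pow; last lra.
      move=> h3. nra.
    have E6 : INR 6 = 6%R by simpl; lra.
    rewrite E6 in C1.
    have S1 : (INR #|S| <= INR K.+1 * 6 * INR (n %/ m))%R by lra.
    have S2 : (INR K.+1 * 6 * INR (n %/ m) <= u * 6 * INR (n %/ m))%R by nra.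
    have S3 : (u * 6 * INR (n %/ m) <= eps * (INR (n %/ m) * INR m))%R.
      have : (eps * (6 * u * u) * INR (n %/ m) <= eps * INR m * INR (n %/ m))%R.
        apply: Rmult_le_compat_r => //; apply: Rmult_le_compat_l; lra.
      have -> : (eps * (6 * u * u) = 6 * u)%R.
        transitivity (6 * u * (u * eps))%R; [ring| rewrite ue; ring].
      lra.
    nra.
  + have K1 : (1 <= expn 2 K.+1)%N by rewrite expn_gt0.
    rewrite minus_INR; last by apply/leP.
    rewrite INR_expn Ek in Rp *. have -> : INR 2 = 2%R by simpl; lra.
    have := pow_R1_Rle 2 K ltac:(lra). move: Rp. simpl. lra.
Qed.
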